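(* A subset $A$ of nonzero elements of a real normed space $X$ is topologically linearly independent if and only if it is uniformly minimal.
   Context: $X$ carries its norm topology. A subset $A\subseteq X\setminus\{0\}$ is topologically linearly independent if for every neighborhood $W$ of $0$ there is a neighborhood $U$ of $0$ such that for every finite $F\subseteq A$ and reals $\{r_a: a\in F\}$, $\sum_{a\in F}r_a a\in U$ implies $r_a a\in W$ for all $a\in F$. A subset $A\subseteq X\setminus\{0\}$ is uniformly minimal if there exists $K>0$ such that for every $a\in A$, $\operatorname{dist}\bigl(a/\|a\|,\ \overline{\langle A\setminus\{a\}\rangle_{\mathbb{R}}}\bigr)\ge K$, where $\langle\cdot\rangle_{\mathbb{R}}$ denotes linear span and the bar denotes norm closure. *)

(* Defs.v *)
From HB Require Import structures.
From mathcomp Require Import all_boot all_order all_algebra.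
From mathcomp Require Import all_classical all_reals all_analysis.
Set Implicit Arguments. Unset Strict Implicit. Unset Printing Implicit Defensive.
Import Order.TTheory GRing.Theory Num.Theory.
Import numFieldNormedType.Exports.
Local Open Scope classical_set_scope.
Local Open Scope ring_scope.

Definition lin_span (R : realType) (X : normedModType R) (S : set X) : set X :=
  [set x | exists (s : seq X) (r : X -> R),
      (forall y, y \in s -> S y) /\ x = \sum_(y <- s) r y *: y].

Definition dist_to (R : realType) (X : normedModType R) (x : X) (S : set X) : R :=
  inf [set `|x - y| | y in S].

(* Topological linear independence. Finite subsets F are given as duplicate-free
   sequences. *)
Definition top_lin_indep (R : realType) (X : normedModType R) (A : set X) : Prop :=
  forall W : set X, nbhs (0 : X) W ->
  exists U : set X, nbhs (0 : X) U /\
    forall (F : seq X) (r : X -> R),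
      uniq F -> (forall a, a \in F -> A a) ->
      U (\sum_(a <- F) r a *: a) ->
      forall a, a \in F -> W (r a *: a).

Definition uniformly_minimal (R : realType) (X : normedModType R) (A : set X) : Prop :=
  exists K : R, 0 < K /\
    forall a, A a ->
      K <= dist_to ((`|a|)^-1 *: a) (closure (lin_span (A `\ a))).

(* Main.v *)
Require Import Defs.
From HB Require Import structures.
From mathcomp Require Import all_boot all_order all_algebra.
From mathcomp Require Import all_classical all_reals all_analysis.
Import Order.TTheory GRing.Theory Num.Theory.
Import numFieldNormedType.Exports.
Local Open Scope classical_set_scope.
Local Open Scope ring_scope.
Lemma nb0E (R : realType) (X : normedModType R) (W : set X) :
  nbhs (0 : X) W -> exists2 e : R, 0 < e & forall y : X, `|y| < e -> W y.
Proof.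
move=> /(proj1 (@nbhs_norm0P R X _)) [e e0 h]; exists e => // y hy; exact: h.
Qed.
Lemma nb0I (R : realType) (X : normedModType R) (e : R) :
  0 < e -> nbhs (0 : X) [set y : X | `|y| < e].
Proof.
move=> e0; apply: (proj2 (@nbhs_norm0P R X _)); exists e => //.
Qed.
Lemma iterop_add (R : realType) (X : normedModType R) n (x : X) :
  iterop n +%R x 0 = x *+ n.
Proof.
case: n => [|n] //=; elim: n => [|n IH] //=; by rewrite IH mulrS addrC.
Qed.

Lemma span_uniq (R : realType) (X : normedModType R) (S : set X) z :
  lin_span S z -> exists (s : seq X) (r : X -> R),
   [/\ uniq s, (forall y, y \in s -> S y) & z = \sum_(y <- s) r y *: y].
Proof.
move=> [s [r [hs ->]]].
exists (undup s), (fun y => (count_mem y s)%:R * r y); split.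
- exact: undup_uniq.
- by move=> y; rewrite mem_undup; apply: hs.
rewrite -big_undup_iterop_count; apply: eq_bigr => y _.
by rewrite iterop_add -scalerA scaler_nat.
Qed.
Lemma fwd (R : realType) (X : normedModType R) (A : set X)
  (hA : A `<=` [set x | x != 0]) :
  top_lin_indep A -> uniformly_minimal A.
Proof.
move=> H.
have [U [/nb0E [d d0 dU] HU]] := H _ (@nb0I R X 1 ltr01).
exists d; split => // a Aa.
have a0 : a != 0 := hA _ Aa.
set v := `|a|^-1 *: a.
have nv : `|v| = 1 by rewrite /v normrZ normfV normr_id mulVf // normr_eq0.
have span0 : lin_span (A `\ a) 0.
  by rewrite /lin_span /=; exists [::], (fun=> 0); split => //; rewrite big_nil.
rewrite /dist_to. apply: lb_le_inf.
  by exists `|v - 0|, 0 => //; apply: subset_closure.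
move=> _ [y cly <-].
rewrite leNgt; apply/negP => vy.
have e0 : 0 < d - `|v - y| by rewrite subr_gt0.
have [z [spz bz]] := cly _ (nbhsx_ballx y _ e0).
have vz : `|v - z| < d.
  rewrite -ball_normE /ball_ /= in bz.
  have := ler_normD (v - y) (y - z); rewrite addrA subrK => h.
  by apply: le_lt_trans h _; rewrite -ltrBrDl.
have [s [r [us sA zE]]] := @span_uniq R X _ _ spz.
rewrite {}zE in vz.
have as_ : a \notin s by apply/negP => /sA [] _ /= /eqP; rewrite eqxx.
pose r' := fun b => if b == a then `|a|^-1 else - r b.
have U1 : uniq (a :: s) by rewrite /= as_ us.
have U2 : forall b, b \in a :: s -> A b.
  by move=> b; rewrite in_cons => /orP [/eqP -> // | /sA []].
have U3 : U (\sum_(b <- a :: s) r' b *: b).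
  apply: dU; rewrite big_cons /r' eqxx.
  have -> : \sum_(j <- s) (if j == a then `|a|^-1 else - r j) *: j =
            - \sum_(j <- s) r j *: j.
    rewrite -sumrN; apply: eq_big_seq => b bs.
    have -> : (b == a) = false by apply/eqP => ba; move: as_; rewrite -ba bs.
    by rewrite scaleNr.
  by [].
have := HU (a :: s) r' U1 U2 U3 a (mem_head _ _).
by rewrite /= /r' eqxx -/v nv ltxx.
Qed.
Lemma bwd (R : realType) (X : normedModType R) (A : set X)
  (hA : A `<=` [set x | x != 0]) :
  uniformly_minimal A -> top_lin_indep A.
Proof.
move=> [K [K0 HK]] W /nb0E [e e0 eW].
exists [set y : X | `|y| < e * K]; split; first exact: nb0I (mulr_gt0 e0 K0).
move=> F r uF FA Hx a aF; apply: eW.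
have a0 : a != 0 := hA _ (FA _ aF).
have [ra0|ra0] := eqVneq (r a) 0; first by rewrite ra0 scale0r normr0.
set c := r a * `|a|.
have c0 : c != 0 by rewrite mulf_neq0 // normr_eq0.
set v := `|a|^-1 *: a.
set y := \sum_(b <- rem a F) r b *: b.
have xE : \sum_(b <- F) r b *: b = r a *: a + y by rewrite (big_rem a aF).
pose z := \sum_(b <- rem a F) (- (c^-1 * r b)) *: b.
have spz : lin_span (A `\ a) z.
  exists (rem a F), (fun b => - (c^-1 * r b)); split => //.
  move=> b; rewrite (mem_rem_uniq _ uF) => /andP [ba bF]; split; first exact: FA.
  by move=> /= bae; move: ba; rewrite bae eqxx.
have zE : z = - (c^-1 *: y).
  by rewrite /z /y scaler_sumr -sumrN; apply: eq_bigr => b _; rewrite scalerA scaleNr.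
have cvz : c *: (v - z) = r a *: a + y.
  rewrite zE opprK scalerDr [c *: (c^-1 *: y)]scalerA mulfV // scale1r.
  by rewrite /v scalerA /c -mulrA mulfV ?normr_eq0 // mulr1.
have Kvz : K <= `|v - z|.
  apply: le_trans (HK _ (FA _ aF)) _; rewrite /dist_to.
  apply: ge_inf.
  - exists 0; move=> _ [w _ <-]; exact: normr_ge0.
  - by exists z => //; exact: subset_closure.
have nra : `|r a *: a| = `|c| by rewrite normrZ /c normrM normr_id.
rewrite /= nra.
have : `|c| * K < e * K.
  apply: le_lt_trans Hx; rewrite xE -cvz (normrZ c).
  by apply: ler_wpM2l.
by rewrite ltr_pM2r.
Qed.

Theorem theorem4p5 (R : realType) (X : normedModType R) (A : set X)
  (hA : A `<=` [set x | x != 0]) :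
  top_lin_indep A <-> uniformly_minimal A.
Proof. split; [exact: fwd | exact: bwd]. Qed.
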